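(* Let $\mathscr D_n$ be a finite b-quad-graph with associated graph $G_n$, let $\alpha_n$ be an admissible labelling, and let $\mathscr C_n,\widetilde{\mathscr C}_n$ be embedded convex $q$-bounded circle patterns for $\mathscr D_n$ and $\alpha_n$ with radius functions $r_n,\tilde r_n$. Let $u_n(v)=\tilde r_n(v)/r_n(v)$. Define two Laplacians on functions $h:V(G_n)\to\mathbb R$ by $\Delta h(v_0)=\sum_{[v_0,v]\in E(G_n)}\mu([v_0,v])(h(v)-h(v_0))$ and $\widetilde\Delta h(v_0)=\sum_{[v_0,v]\in E(G_n)}\tilde\mu([v_0,v])(h(v)-h(v_0))$, where $\mu([v_0,v])=2f'_{\alpha_n([v_0,v])}(\log(r_n(v)/r_n(v_0)))$ and $\tilde\mu([v_0,v])=2f'_{\alpha_n([v_0,v])}(\log(\tilde r_n(v)/\tilde r_n(v_0)))$, with $f'_\theta(x)=\frac{\sin\theta}{2(\cosh x-\cos\theta)}$. Then for all interior vertices $v$ of $G_n$, $\Delta u_n(v)\ge0$ and $\widetilde\Delta(1/u_n)(v)\ge0$.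
   Context: A b-quad-graph: strongly regular cell decomposition into quadrilaterals with bipartite 1-skeleton (white/black vertices); $G_n$ has the white vertices, adjacent iff incident to a common face. Admissible labelling: at each interior black vertex the labels of incident faces sum to $2\pi$. Circle pattern: circles with circles of adjacent vertices intersecting at exterior angle $\alpha$ (angle at an intersection point between the radii to the two centers), with equally oriented kites formed by centers and intersection points, locally isomorphic to the b-quad-graph at interior vertices; embedded: kites have disjoint interiors and meet in an edge/vertex iff the faces do. Convex $q$-bounded ($q>1$): all kites convex and each kite's diagonal length ratio lies in $[1/q,q]$. *)

(* Defs.v *)
From Stdlib Require Import Reals Lra List.
Open Scope R_scope.

(* A face f has boundary cycle, in counterclockwise order,              *)
(*   fw f false, fb f false, fw f true, fb f true.                      *)
Record bquad := mkBQ {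
  W : Type; B : Type; F : Type;
  eqW : forall x y : W, {x = y} + {x <> y};
  eqB : forall x y : B, {x = y} + {x <> y};
  enumW : list W; enumB : list B; enumF : list F;
  fw : F -> bool -> W;
  fb : F -> bool -> B }.

Arguments fw {_} _ _.
Arguments fb {_} _ _.

(* The axioms of a finite, strongly regular, consistently oriented
   cell decomposition into quadrilaterals with bipartite 1-skeleton. *)
Definition is_bquad (D : bquad) : Prop :=
  (NoDup (enumW D) /\ forall w, In w (enumW D)) /\
  (NoDup (enumB D) /\ forall b, In b (enumB D)) /\
  (NoDup (enumF D) /\ forall f, In f (enumF D)) /\
  (forall f : F D, fw f false <> fw f true /\ fb f false <> fb f true) /\
  (* strong regularity: two distinct faces meet in at most a vertex or an
     edge; for quadrilaterals with bipartite boundary this means that they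
     do not share both white or both black vertices *)
  (forall f g : F D, f <> g ->
     ~ (forall i, exists j, fw f i = fw g j) /\
     ~ (forall i, exists j, fb f i = fb g j)) /\
  (forall w : W D, exists (f : F D) i, fw f i = w) /\
  (forall b : B D, exists (f : F D) i, fb f i = b) /\
  (* consistent orientation (an edge has at most one face on each side):
     at white corner (f,i) the face goes counterclockwise from edge
     [fw f i, fb f i] to edge [fw f i, fb f (negb i)] *)
  (forall (f g : F D) i j, fw f i = fw g j -> fb f i = fb g j -> f = g /\ i = j) /\
  (forall (f g : F D) i j, fw f i = fw g j -> fb f (negb i) = fb g (negb j) ->
     f = g /\ i = j).

Fixpoint chain {A} (Rl : A -> A -> Prop) (l : list A) : Prop :=
  match l with
  | a :: ((b :: _) as t) => Rl a b /\ chain Rl t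
  | _ => True
  end.

Definition cyc_chain {A} (Rl : A -> A -> Prop) (l : list A) : Prop :=
  match l with
  | nil => True
  | a :: _ => chain Rl (l ++ a :: nil)
  end.

(* A white vertex is interior iff the faces around it form a closed
   cycle (each consecutive pair sharing an edge). *)
Definition interior_W (D : bquad) (w : W D) : Prop :=
  exists l : list (F D * bool),
    l <> nil /\ NoDup l /\
    (forall f i, fw f i = w <-> In (f, i) l) /\
    cyc_chain (fun x y => fb (fst x) (negb (snd x)) = fb (fst y) (snd y)) l.

(* Same for black vertices; at black corner (f,j) the face goes
   counterclockwise from edge [fb f j, fw f (negb j)] to [fb f j, fw f j]. *)
Definition interior_B (D : bquad) (b : B D) : Prop :=
  exists l : list (F D * bool),
    l <> nil /\ NoDup l /\
    (forall f j, fb f j = b <-> In (f, j) l) /\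
    cyc_chain (fun x y => fw (fst x) (snd x) = fw (fst y) (negb (snd y))) l.

Definition sumF (D : bquad) (g : F D -> R) : R :=
  fold_right (fun f acc => g f + acc) 0 (enumF D).

Definition sum_bool (g : bool -> R) : R := g false + g true.

Definition admissible (D : bquad) (alpha : F D -> R) : Prop :=
  (forall f, 0 < alpha f < PI) /\
  (forall b, interior_B D b ->
     sumF D (fun f => sum_bool (fun j =>
        if eqB D (fb f j) b then alpha f else 0)) = 2 * PI).

Definition pt := (R * R)%type.
Definition vsub (a b : pt) : pt := (fst a - fst b, snd a - snd b).
Definition dot (a b : pt) : R := fst a * fst b + snd a * snd b.
Definition cross (a b : pt) : R := fst a * snd b - snd a * fst b.
Definition norm (a : pt) : R := sqrt (dot a a).
Definition dist (a b : pt) : R := norm (vsub a b).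
Definition angle (a b : pt) : R := acos (dot a b / (norm a * norm b)).
Definition comb (t : R) (a b : pt) : pt :=
  (t * fst a + (1 - t) * fst b, t * snd a + (1 - t) * snd b).

(* Data of a circle pattern: centres c, radii r (the radius function),
   intersection points p (images of black vertices). *)
Section Kites.
Variable D : bquad.
Variables (c : W D -> pt) (p : B D -> pt).

Definition kite (f : F D) : list pt :=
  c (fw f false) :: p (fb f false) :: c (fw f true) :: p (fb f true) :: nil.

Definition kv (f : F D) (k : nat) : pt := nth (k mod 4) (kite f) (0, 0).

Definition kite_area2 (f : F D) : R :=
  cross (kv f 0) (kv f 1) + cross (kv f 1) (kv f 2)
  + cross (kv f 2) (kv f 3) + cross (kv f 3) (kv f 0).

Definition in_kite (s : R) (f : F D) (X : pt) : Prop :=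
  forall k, (k < 4)%nat ->
    0 <= s * cross (vsub (kv f (S k)) (kv f k)) (vsub X (kv f k)).
Definition in_kite_int (s : R) (f : F D) (X : pt) : Prop :=
  forall k, (k < 4)%nat ->
    0 < s * cross (vsub (kv f (S k)) (kv f k)) (vsub X (kv f k)).

Definition common_img (f g : F D) (P : pt) : Prop :=
  (exists i j, fw f i = fw g j /\ P = c (fw f i)) \/
  (exists i j, fb f i = fb g j /\ P = p (fb f i)).

(* convex hull of the images of the common vertices (empty, a point, or
   a segment = image of the common edge) *)
Definition hull_common (f g : F D) (X : pt) : Prop :=
  exists P Q t, common_img f g P /\ common_img f g Q /\ 0 <= t <= 1 /\
    X = comb t P Q.
End Kites.

Definition circle_pattern (D : bquad) (alpha : F D -> R)
    (c : W D -> pt) (r : W D -> R) (p : B D -> pt) (s : R) : Prop :=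
  (s = 1 \/ s = -1) /\
  (forall w, 0 < r w) /\
  forall f,
    (forall i j, dist (p (fb f j)) (c (fw f i)) = r (fw f i)) /\
    (* exterior intersection angle alpha: angle at the intersection point
       between the radii to the two centres *)
    (forall j, angle (vsub (c (fw f false)) (p (fb f j)))
                     (vsub (c (fw f true)) (p (fb f j))) = alpha f) /\
    0 < s * kite_area2 D c p f.

Definition convex_kites (D : bquad) (c : W D -> pt) (p : B D -> pt)
    (s : R) : Prop :=
  forall f k, (k < 4)%nat ->
    0 <= s * cross (vsub (kv D c p f (S k)) (kv D c p f k))
                   (vsub (kv D c p f (S (S k))) (kv D c p f (S k))).

Definition q_bounded (D : bquad) (q : R) (c : W D -> pt) (p : B D -> pt)
    : Prop :=
  forall f,
    let d1 := dist (c (fw f false)) (c (fw f true)) in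
    let d2 := dist (p (fb f false)) (p (fb f true)) in
    / q <= d1 / d2 <= q.

Definition embedded (D : bquad) (c : W D -> pt) (p : B D -> pt) (s : R)
    : Prop :=
  forall f g, f <> g ->
    (forall X, ~ (in_kite_int D c p s f X /\ in_kite_int D c p s g X)) /\
    (forall X, (in_kite D c p s f X /\ in_kite D c p s g X) <->
               hull_common D c p f g X).

Definition ecq_pattern (D : bquad) (alpha : F D -> R) (q : R)
    (c : W D -> pt) (r : W D -> R) (p : B D -> pt) (s : R) : Prop :=
  circle_pattern D alpha c r p s /\ convex_kites D c p s /\
  q_bounded D q c p /\ embedded D c p s.

Definition fprime (theta x : R) : R :=
  sin theta / (2 * (cosh x - cos theta)).

Definition mu (D : bquad) (alpha : F D -> R) (r : W D -> R)
    (f : F D) (v0 v : W D) : R :=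
  2 * fprime (alpha f) (ln (r v / r v0)).

(* Delta h (v0) = sum over edges [v0,v] of G_n; the edges of G_n at v0
   correspond bijectively to the faces incident to v0 (strong regularity),
   v being the opposite white vertex of the face. *)
Definition laplacian (D : bquad) (alpha : F D -> R) (r : W D -> R)
    (h : W D -> R) (v0 : W D) : R :=
  sumF D (fun f => sum_bool (fun i =>
    if eqW D (fw f i) v0 then
      mu D alpha r f v0 (fw f (negb i)) * (h (fw f (negb i)) - h v0)
    else 0)).

(* Main.v *)
Require Import Defs.
From Stdlib Require Import Reals.
Open Scope R_scope.
From Stdlib Require Import Lra Lia List Permutation.
Import Defs.

Definition Vq (al y : R) := 1 - 2*y*cos al + y*y.
Definition Vn (al y : R) := sqrt (Vq al y).
Definition hh (al y : R) := acos ((1 - y*cos al)/Vn al y).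

Lemma sin_al_pos al : 0 < al < PI -> 0 < sin al.
Proof. intros; apply sin_gt_0; lra. Qed.

Lemma cs1 x : sin x * sin x + cos x * cos x = 1.
Proof. pose proof (sin2_cos2 x). unfold Rsqr in H. lra. Qed.

Lemma Vq_eq al y : Vq al y = (y - cos al)*(y - cos al) + sin al * sin al.
Proof. unfold Vq. pose proof (cs1 al) as H. rewrite <- H at 1. ring. Qed.

Lemma Vq_pos al y : 0 < al < PI -> 0 < Vq al y.
Proof. intros H. rewrite Vq_eq. pose proof (sin_al_pos al H).
  pose proof (Rmult_lt_0_compat _ _ H0 H0). pose proof (Rle_0_sqr (y - cos al)). unfold Rsqr in *. lra. Qed.

Lemma Vn_pos al y : 0 < al < PI -> 0 < Vn al y.
Proof. intros; unfold Vn; apply sqrt_lt_R0, Vq_pos; auto. Qed.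

Lemma Vn_sq al y : 0 < al < PI -> Vn al y * Vn al y = Vq al y.
Proof. intros; unfold Vn; apply sqrt_sqrt; left; apply Vq_pos; auto. Qed.

Lemma hh_cs al y : 0 < al < PI -> 0 < y ->
  cos (hh al y) = (1 - y*cos al)/Vn al y /\
  sin (hh al y) = y * sin al / Vn al y.
Proof.
  intros Ha Hy.
  pose proof (Vn_pos al y Ha) as HV. pose proof (Vn_sq al y Ha) as HV2.
  pose proof (sin_al_pos al Ha) as Hs. pose proof (cs1 al) as Hc.
  assert (Hsq : ((1 - y*cos al)/Vn al y)² = 1 - (y * sin al / Vn al y)²).
  { unfold Rsqr. field_simplify_eq; [|lra].
    replace (Vn al y ^ 2) with (Vn al y * Vn al y) by ring. rewrite HV2. unfold Vq.
    replace (sin al ^ 2) with (1 - cos al ^ 2) by (simpl; lra). ring. }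
  assert (Hb : -1 <= (1 - y*cos al)/Vn al y <= 1).
  { assert (0 <= (y * sin al / Vn al y)²) by apply Rle_0_sqr.
    assert (((1 - y*cos al)/Vn al y)² <= 1) by lra.
    set (t := (1 - y*cos al)/Vn al y) in *. unfold Rsqr in *. nra. }
  split. unfold hh; apply cos_acos; auto.
  unfold hh; rewrite sin_acos; auto.
  replace (1 - ((1 - y * cos al) / Vn al y)²) with ((y * sin al / Vn al y)²) by lra.
  apply sqrt_Rsqr. apply Rlt_le. apply Rdiv_lt_0_compat; nra.
Qed.

Lemma xcos_le_sin x : 0 <= x <= PI/2 -> x * cos x <= sin x.
Proof.
  intros Hx. pose proof PI_4. pose proof PI_RGT_0.
  destruct (sin_bound x 0 ltac:(lra) ltac:(lra)) as [H1 _].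
  destruct (cos_bound x 0 ltac:(lra) ltac:(lra)) as [_ H2].
  unfold sin_approx, cos_approx, sin_term, cos_term in *. simpl in H1, H2.
  assert (x * cos x <= x * (1 * (1 / 1) + -1 * 1 * (x * (x * 1) / (1 + 1)) +
          -1 * (-1 * 1) * (x * (x * (x * (x * 1))) / (1 + 1 + 1 + 1 + 1 + 1 + 1 + 1 + 1 + 1 + 1 + 1 + 1 + 1 + 1 + 1 + 1 + 1 + 1 + 1 + 1 + 1 + 1 + 1))))
    by (apply Rmult_le_compat_l; lra).
  assert (x*x <= 4) by nra.
  assert (0 <= x*x*x) by (apply Rmult_le_pos; [nra|lra]).
  nra.
Qed.

Lemma sin_le_id x : 0 <= x -> sin x <= x.
Proof.
  intros Hx. pose proof PI_4. pose proof PI_RGT_0.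
  destruct (Rle_lt_dec x PI).
  - destruct (sin_bound x 0 ltac:(lra) ltac:(lra)) as [_ H1].
    unfold sin_approx, sin_term in *. simpl in H1.
    assert (x*x <= 16) by nra.
    assert (0 <= x*x*x) by (apply Rmult_le_pos; [nra|lra]).
    nra.
  - pose proof (SIN_bound x). pose proof PI2_1. lra.
Qed.

Lemma hh_bound al y : 0 <= hh al y <= PI.
Proof. apply acos_bound. Qed.

Lemma key_ineq al y z : 0 < al < PI -> 0 < y -> 0 < z ->
  cos al <= y -> cos al <= z ->
  hh al z - hh al y <= sin al * (z - y) / Vq al y.
Proof.
  intros Ha Hy Hz Hcy Hcz.
  destruct (hh_cs al y Ha Hy) as [cy sy].
  destruct (hh_cs al z Ha Hz) as [cz sz].
  pose proof (Vn_pos al y Ha) as Vy. pose proof (Vn_pos al z Ha) as Vz.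
  pose proof (Vn_sq al y Ha) as Vy2. pose proof (Vn_sq al z Ha) as Vz2.
  pose proof (sin_al_pos al Ha) as Hs. pose proof (cs1 al) as Hc.
  pose proof (Vq_pos al y Ha) as Qy.
  set (d := hh al z - hh al y).
  set (s := sin al) in *. set (c := cos al) in *.
  set (Y := Vn al y) in *. set (Z := Vn al z) in *.
  assert (Hsd : sin d = s * (z - y) / (Z * Y)).
  { unfold d. rewrite sin_minus, cy, sy, cz, sz. field. lra. }
  assert (Hcd : cos d = (Vq al y + (z - y)*(y - c)) / (Z * Y)).
  { unfold d. rewrite cos_minus, cy, sy, cz, sz. unfold Vq. fold c.
    field_simplify_eq; [| lra].
    replace (s^2) with (1 - c^2) by (simpl; lra). ring. }
  pose proof (hh_bound al y). pose proof (hh_bound al z).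
  assert (Hd : -PI <= d <= PI) by (unfold d; lra).
  pose proof PI_RGT_0.
  destruct (Rle_lt_dec y z) as [Hyz | Hyz].
  - assert (HN : Vq al y <= Vq al y + (z - y)*(y - c)) by nra.
    assert (Hcpos : 0 < cos d) by (rewrite Hcd; apply Rdiv_lt_0_compat; nra).
    assert (Hsn : 0 <= sin d) by (rewrite Hsd; apply Rmult_le_pos; [nra| left; apply Rinv_0_lt_compat; nra]).
    assert (Hd1 : d < PI/2).
    { destruct (Rlt_le_dec d (PI/2)); auto.
      pose proof (cos_le_0 d r ltac:(lra)). lra. }
    assert (Hd0 : 0 <= d).
    { destruct (Rle_lt_dec 0 d); auto.
      assert (-PI < d).
      { destruct (Rle_lt_dec d (-PI/2)); [|lra].
        pose proof (cos_le_0 (-d) ltac:(lra) ltac:(lra)). rewrite cos_neg in H2. lra. }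
      pose proof (sin_lt_0_var d H2 r). lra. }
    pose proof (xcos_le_sin d ltac:(lra)) as Hx.
    rewrite Hsd, Hcd in Hx.
    assert (d * (Vq al y + (z - y) * (y - c)) <= s * (z - y)).
    { apply (Rmult_le_reg_r (/ (Z*Y))). apply Rinv_0_lt_compat; nra.
      unfold Rdiv in Hx. lra. }
    apply (Rmult_le_reg_r (Vq al y)); auto. unfold Rdiv.
    rewrite Rmult_assoc, Rinv_l by lra. rewrite Rmult_1_r. nra.
  - assert (Hsn : sin d < 0).
    { rewrite Hsd. unfold Rdiv. assert (0 < / (Z*Y)) by (apply Rinv_0_lt_compat; nra).
      assert (s * (z - y) < 0) by nra. nra. }
    assert (Hdn : d < 0).
    { destruct (Rlt_le_dec d 0); auto. pose proof (sin_ge_0 d r ltac:(lra)). lra. }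
    pose proof (sin_le_id (-d) ltac:(lra)) as Hx. rewrite sin_neg, Hsd in Hx.
    assert (HZY : Z <= Y).
    { unfold Z, Y, Vn. apply sqrt_le_1_alt. unfold Vq. fold c. assert (0 <= (y - z)*(y+z-2*c)) by (apply Rmult_le_pos; lra). nra. }
    assert (s * (y - z) / (Y * Y) <= s * (y - z) / (Z * Y)).
    { apply Rmult_le_compat_l. nra. apply Rinv_le_contravar; nra. }
    assert (s * (y - z) / (Z * Y) <= - d).
    { replace (s * (y - z) / (Z * Y)) with (- (s * (z - y) / (Z * Y))) by (field; lra). lra. }
    rewrite Vy2 in H2.
    replace (s * (z - y) / Vq al y) with (- (s * (y - z) / Vq al y)) by (field; lra). lra.
Qed.

Lemma sq_eq_cases x k : 0 < k -> x * x = k * k -> x = k \/ x = - k.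
Proof. intros Hk H. assert ((x - k)*(x + k) = 0) by nra.
  destruct (Rmult_integral _ _ H0); [left|right]; lra. Qed.

Lemma pos_mul_nonneg P x : 0 < P -> 0 <= P*x -> 0 <= x.
Proof. intros. destruct (Rle_lt_dec 0 x); auto. assert (P*x < 0) by (rewrite <- (Rmult_0_r P); apply Rmult_lt_compat_l; lra) ; lra. Qed.

Lemma kite_alg al r r' s a1 a2 b1 b2 q1 q2 :
  0 < al < PI -> 0 < r -> 0 < r' -> (s = 1 \/ s = -1) ->
  a1*a1+a2*a2 = r*r -> q1*q1+q2*q2 = r*r ->
  (a1-b1)*(a1-b1)+(a2-b2)*(a2-b2) = r'*r' ->
  (q1-b1)*(q1-b1)+(q2-b2)*(q2-b2) = r'*r' ->
  a1*b1+a2*b2 = r*r - r*r'*cos al -> q1*b1+q2*b2 = r*r - r*r'*cos al ->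
  0 < s*((a1*b2 - a2*b1) + (b1*q2 - b2*q1)) ->
  0 <= s*(a1*q2 - a2*q1) ->
  0 <= s*((b1-a1)*(q2-b2) - (b2-a2)*(q1-b1)) ->
  q1 = cos (s*(2*hh al (r'/r)))*a1 - sin (s*(2*hh al (r'/r)))*a2 /\
  q2 = sin (s*(2*hh al (r'/r)))*a1 + cos (s*(2*hh al (r'/r)))*a2 /\
  cos al <= r'/r /\ 0 < 2*hh al (r'/r) <= PI /\
  s*(a1*b2 - a2*b1) = r*r'*sin al /\ s*(b1*q2 - b2*q1) = r*r'*sin al.
Proof.
  intros Ha Hr Hr' Hs Ea Eq Eab Eqb Dab Dqb Area Tc TC.
  set (y := r'/r).
  assert (Hy : 0 < y) by (unfold y; apply Rdiv_lt_0_compat; lra).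
  destruct (hh_cs al y Ha Hy) as [ch sh].
  pose proof (Vn_pos al y Ha) as HV. pose proof (Vn_sq al y Ha) as HV2.
  pose proof (Vq_pos al y Ha) as HQ.
  pose proof (sin_al_pos al Ha) as Hsa. pose proof (cs1 al) as Hcs.
  set (c := cos al) in *. set (sa := sin al) in *.
  set (h := hh al y) in *.
  assert (Hbb : b1*b1+b2*b2 = r*r + r'*r' - 2*r*r'*c) by (replace (b1*b1+b2*b2) with (((a1-b1)*(a1-b1)+(a2-b2)*(a2-b2)) - (a1*a1+a2*a2) + 2*(a1*b1+a2*b2)) by ring; rewrite Eab, Ea, Dab; ring).
  assert (Hrr : 0 < r*r) by (apply Rmult_lt_0_compat; lra).
  assert (HK : 0 < r*r'*sa) by (apply Rmult_lt_0_compat; [apply Rmult_lt_0_compat|]; lra).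
  assert (Hs2 : s*s = 1) by (destruct Hs; subst; lra).
  assert (X1 : (s*(a1*b2 - a2*b1))*(s*(a1*b2 - a2*b1)) = (r*r'*sa)*(r*r'*sa)).
  { replace ((s*(a1*b2 - a2*b1))*(s*(a1*b2 - a2*b1))) with
      ((s*s)*((a1*a1+a2*a2)*(b1*b1+b2*b2) - (a1*b1+a2*b2)*(a1*b1+a2*b2))) by ring.
    rewrite Hs2, Ea, Hbb, Dab. replace (r*r'*sa*(r*r'*sa)) with (r*r*(r'*r')*(sa*sa)) by ring.
    replace (sa*sa) with (1 - c*c) by lra. ring. }
  assert (X2 : (s*(b1*q2 - b2*q1))*(s*(b1*q2 - b2*q1)) = (r*r'*sa)*(r*r'*sa)).
  { replace ((s*(b1*q2 - b2*q1))*(s*(b1*q2 - b2*q1))) with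
      ((s*s)*((q1*q1+q2*q2)*(b1*b1+b2*b2) - (q1*b1+q2*b2)*(q1*b1+q2*b2))) by ring.
    rewrite Hs2, Eq, Hbb, Dqb. replace (r*r'*sa*(r*r'*sa)) with (r*r*(r'*r')*(sa*sa)) by ring.
    replace (sa*sa) with (1 - c*c) by lra. ring. }
  assert (Cab : s*(a1*b2 - a2*b1) = r*r'*sa /\ s*(b1*q2 - b2*q1) = r*r'*sa).
  { destruct (sq_eq_cases _ _ HK X1) as [E1|E1];
    destruct (sq_eq_cases _ _ HK X2) as [E2|E2]; try (split; assumption); lra. }
  destruct Cab as [Cab Cbq].
  assert (cab : a1*b2 - a2*b1 = s*(r*r'*sa)) by (transitivity (s*s*(a1*b2 - a2*b1)); [rewrite Hs2; ring | rewrite <- Cab; ring]).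
  assert (cbq : b1*q2 - b2*q1 = s*(r*r'*sa)) by (transitivity (s*s*(b1*q2 - b2*q1)); [rewrite Hs2; ring | rewrite <- Cbq; ring]).
  assert (Hr2 : r*r <> 0) by lra.
  assert (Hbq : b1*b1+b2*b2 = r*r*Vq al y) by (rewrite Hbb; unfold Vq, y; fold c; field; lra).
  assert (Hb2 : b1*b1+b2*b2 <> 0) by (rewrite Hbq; apply Rgt_not_eq; apply Rmult_lt_0_compat; lra).
  assert (eb1 : b1 = ((r*r - r*r'*c)*a1 - s*(r*r'*sa)*a2)/(r*r)).
  { apply (Rmult_eq_reg_r (r*r)); auto. unfold Rdiv. rewrite Rmult_assoc, Rinv_l, Rmult_1_r by auto.
    rewrite <- Dab, <- cab, <- Ea. ring. }
  assert (eb2 : b2 = ((r*r - r*r'*c)*a2 + s*(r*r'*sa)*a1)/(r*r)).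
  { apply (Rmult_eq_reg_r (r*r)); auto. unfold Rdiv. rewrite Rmult_assoc, Rinv_l, Rmult_1_r by auto.
    rewrite <- Dab, <- cab, <- Ea. ring. }
  assert (eq1 : q1 = ((r*r - r*r'*c)*b1 - s*(r*r'*sa)*b2)/(b1*b1+b2*b2)).
  { apply (Rmult_eq_reg_r (b1*b1+b2*b2)); auto. unfold Rdiv. rewrite Rmult_assoc, Rinv_l, Rmult_1_r by auto.
    rewrite <- Dqb, <- cbq. ring. }
  assert (eq2 : q2 = ((r*r - r*r'*c)*b2 + s*(r*r'*sa)*b1)/(b1*b1+b2*b2)).
  { apply (Rmult_eq_reg_r (b1*b1+b2*b2)); auto. unfold Rdiv. rewrite Rmult_assoc, Rinv_l, Rmult_1_r by auto.
    rewrite <- Dqb, <- cbq. ring. }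
  assert (C2 : cos (s*(2*h)) = ((1 - y*c)*(1 - y*c) - y*sa*(y*sa))/Vq al y).
  { destruct Hs as [-> | ->].
    - rewrite Rmult_1_l, cos_2a, ch, sh. rewrite <- HV2. field. lra.
    - replace (-1*(2*h)) with (-(2*h)) by ring. rewrite cos_neg, cos_2a, ch, sh. rewrite <- HV2. field. lra. }
  assert (S2 : sin (s*(2*h)) = s*(2*(y*sa)*(1 - y*c))/Vq al y).
  { destruct Hs as [-> | ->].
    - rewrite Rmult_1_l, sin_2a, ch, sh. rewrite <- HV2. field. lra.
    - replace (-1*(2*h)) with (-(2*h)) by ring. rewrite sin_neg, sin_2a, ch, sh. rewrite <- HV2. field. lra. }
  assert (EQ : Vq al y = (r*r + r'*r' - 2*r*r'*c)/(r*r)).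
  { unfold Vq, y. fold c. field. lra. }
  assert (G1 : q1 = cos (s*(2*h))*a1 - sin (s*(2*h))*a2).
  { rewrite C2, S2, EQ, eq1, Hbb, eb1, eb2. unfold y. destruct Hs as [-> | ->]; field; split; lra. }
  assert (G2 : q2 = sin (s*(2*h))*a1 + cos (s*(2*h))*a2).
  { rewrite C2, S2, EQ, eq2, Hbb, eb1, eb2. unfold y. destruct Hs as [-> | ->]; field; split; lra. }
  assert (Tc' : s*(a1*q2 - a2*q1) = (r*r)*(2*(y*sa)*(1 - y*c))/Vq al y).
  { rewrite G1, G2, S2. replace (s * (a1 * (s * (2 * (y * sa) * (1 - y * c)) / Vq al y * a1 + cos (s * (2 * h)) * a2) -
     a2 * (cos (s * (2 * h)) * a1 - s * (2 * (y * sa) * (1 - y * c)) / Vq al y * a2)))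
     with ((s*s)*(a1*a1+a2*a2)*(2 * (y * sa) * (1 - y * c)) / Vq al y) by (field; lra).
    rewrite Hs2, Ea. field. lra. }
  assert (Hyc : 0 <= 1 - y*c).
  { rewrite Tc' in Tc. 
    assert (0 <= (r*r)*(2*(y*sa)*(1 - y*c))) .
    { apply (Rmult_le_reg_r (/ Vq al y)). apply Rinv_0_lt_compat; lra. rewrite Rmult_0_l. exact Tc. }
    assert (0 < r*r*(2*(y*sa))) by (apply Rmult_lt_0_compat; [lra| apply Rmult_lt_0_compat; [lra| apply Rmult_lt_0_compat; lra]]).
    apply (pos_mul_nonneg _ _ H0). rewrite <- Rmult_assoc in H. exact H. }
  assert (TC' : s*((b1-a1)*(q2-b2) - (b2-a2)*(q1-b1)) =
     2*(r*r'*sa) - (r*r)*(2*(y*sa)*(1 - y*c))/Vq al y).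
  { rewrite <- Tc'. replace (s*((b1-a1)*(q2-b2) - (b2-a2)*(q1-b1))) with
      (s*(a1*b2 - a2*b1) + s*(b1*q2 - b2*q1) - s*(a1*q2 - a2*q1)) by ring.
    rewrite Cab, Cbq. ring. }
  assert (TC2 : 2*(r*r'*sa) - (r*r)*(2*(y*sa)*(1 - y*c))/Vq al y =
                 2*(r*r)*(y*y*sa)*(y - c)/Vq al y).
  { replace (r*r'*sa) with (r*r*(y*sa)) by (unfold y; field; lra).
    unfold Vq. fold c. field. change (Vq al y <> 0). lra. }
  assert (Hcy : c <= y).
  { rewrite TC', TC2 in TC.
    assert (0 <= 2*(r*r)*(y*y*sa)*(y - c)).
    { apply (Rmult_le_reg_r (/ Vq al y)). apply Rinv_0_lt_compat; lra. rewrite Rmult_0_l. exact TC. }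
    assert (0 < 2*(r*r)*(y*y*sa)).
    { apply Rmult_lt_0_compat; [lra|]. apply Rmult_lt_0_compat; [apply Rmult_lt_0_compat|]; lra. }
    assert (0 <= y - c) by (apply (pos_mul_nonneg _ _ H0); exact H). lra. }
  pose proof (hh_bound al y) as Hb. fold h in Hb.
  assert (hpos : 0 < h).
  { destruct Hb as [[?|E] ?]; auto. rewrite <- E, sin_0 in sh.
    assert (0 < y*sa/Vn al y) by (apply Rdiv_lt_0_compat; [apply Rmult_lt_0_compat|]; lra). lra. }
  assert (hle : h <= PI/2).
  { destruct (Rle_lt_dec h (PI/2)); auto.
    pose proof (cos_decreasing_1 (PI/2) h ltac:(pose proof PI_RGT_0; lra) ltac:(lra) ltac:(lra) ltac:(lra) r0).
    rewrite cos_PI2, ch in H.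
    assert (0 <= (1 - y*c)/Vn al y) by (apply Rmult_le_pos; [lra| left; apply Rinv_0_lt_compat; lra]).
    lra. }
  repeat split; try assumption; lra.
Qed.


Definition rot (t : R) (u : pt) : pt :=
  (cos t * fst u - sin t * snd u, sin t * fst u + cos t * snd u).

Lemma dot_nonneg u : 0 <= dot u u.
Proof. unfold dot. pose proof (Rle_0_sqr (fst u)). pose proof (Rle_0_sqr (snd u)). unfold Rsqr in *. lra. Qed.

Lemma norm_sq u : norm u * norm u = dot u u.
Proof. unfold norm. apply sqrt_sqrt, dot_nonneg. Qed.

Lemma norm_nonneg u : 0 <= norm u.
Proof. unfold norm. apply sqrt_pos. Qed.

Lemma angle_dot u v al : 0 < norm u -> 0 < norm v -> angle u v = al ->
  dot u v = norm u * norm v * cos al.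
Proof.
  intros Hu Hv Ha. unfold angle in Ha.
  set (x := dot u v / (norm u * norm v)) in Ha.
  assert (Hx : -1 <= x <= 1).
  { assert (HC : dot u v * dot u v <= (norm u * norm v) * (norm u * norm v)).
    { replace ((norm u * norm v) * (norm u * norm v)) with ((norm u * norm u) * (norm v * norm v)) by ring.
      rewrite !norm_sq. unfold dot.
      pose proof (Rle_0_sqr (fst u * snd v - snd u * fst v)). unfold Rsqr in H. nra. }
    assert (Hp : 0 < norm u * norm v) by (apply Rmult_lt_0_compat; auto).
    unfold x. split.
    - apply (Rmult_le_reg_r (norm u * norm v)); auto. unfold Rdiv. rewrite Rmult_assoc, Rinv_l by lra. nra.
    - apply (Rmult_le_reg_r (norm u * norm v)); auto. unfold Rdiv. rewrite Rmult_assoc, Rinv_l by lra. nra. }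
  rewrite <- Ha, cos_acos by auto. unfold x. field. split; lra.
Qed.

Lemma dist_sq P Q d : dist P Q = d -> dot (vsub P Q) (vsub P Q) = d * d.
Proof. intros H. rewrite <- H. unfold dist. rewrite norm_sq. reflexivity. Qed.

Lemma kite_pts al r r' s (c P C Q : pt) :
  0 < al < PI -> 0 < r -> 0 < r' -> (s = 1 \/ s = -1) ->
  dist P c = r -> dist Q c = r -> dist P C = r' -> dist Q C = r' ->
  dot (vsub c P) (vsub C P) = r*r'*cos al -> dot (vsub c Q) (vsub C Q) = r*r'*cos al ->
  0 < s*(cross c P + cross P C + cross C Q + cross Q c) ->
  0 <= s*cross (vsub c Q) (vsub P c) -> 0 <= s*cross (vsub C P) (vsub Q C) ->
  vsub Q c = rot (s*(2*hh al (r'/r))) (vsub P c) /\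
  cos al <= r'/r /\ 0 < 2*hh al (r'/r) <= PI /\
  0 < s*cross (vsub P c) (vsub C c) /\ 0 < s*cross (vsub C c) (vsub Q c).
Proof.
  intros Ha Hr Hr' Hs d1 d2 d3 d4 e1 e2 Ar T1 T2.
  apply dist_sq in d1, d2, d3, d4.
  destruct c as [c1 c2], P as [P1 P2], C as [C1 C2], Q as [Q1 Q2].
  unfold dot, cross, vsub in *; simpl in *.
  assert (HK : 0 < r*r'*sin al) by (apply Rmult_lt_0_compat; [apply Rmult_lt_0_compat|apply sin_al_pos]; lra).
  assert (h1 : (P1-c1)*(P1-c1)+(P2-c2)*(P2-c2) = r*r) by (rewrite <- d1; ring).
  assert (h2 : (Q1-c1)*(Q1-c1)+(Q2-c2)*(Q2-c2) = r*r) by (rewrite <- d2; ring).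
  assert (h3 : (P1-c1-(C1-c1))*(P1-c1-(C1-c1))+(P2-c2-(C2-c2))*(P2-c2-(C2-c2)) = r'*r') by (rewrite <- d3; ring).
  assert (h4 : (Q1-c1-(C1-c1))*(Q1-c1-(C1-c1))+(Q2-c2-(C2-c2))*(Q2-c2-(C2-c2)) = r'*r') by (rewrite <- d4; ring).
  assert (h5 : (P1 - c1) * (C1 - c1) + (P2 - c2) * (C2 - c2) = r*r - r*r'*cos al).
  { replace ((P1 - c1) * (C1 - c1) + (P2 - c2) * (C2 - c2)) with
      ((P1 - c1) * (P1 - c1) + (P2 - c2) * (P2 - c2) - ((c1 - P1) * (C1 - P1) + (c2 - P2) * (C2 - P2))) by ring.
    rewrite h1, e1. ring. }
  assert (h6 : (Q1 - c1) * (C1 - c1) + (Q2 - c2) * (C2 - c2) = r*r - r*r'*cos al).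
  { replace ((Q1 - c1) * (C1 - c1) + (Q2 - c2) * (C2 - c2)) with
      ((Q1 - c1) * (Q1 - c1) + (Q2 - c2) * (Q2 - c2) - ((c1 - Q1) * (C1 - Q1) + (c2 - Q2) * (C2 - Q2))) by ring.
    rewrite h2, e2. ring. }
  assert (h7 : 0 < s*(((P1 - c1) * (C2 - c2) - (P2 - c2) * (C1 - c1)) + ((C1 - c1) * (Q2 - c2) - (C2 - c2) * (Q1 - c1)))).
  { replace (((P1 - c1) * (C2 - c2) - (P2 - c2) * (C1 - c1)) + ((C1 - c1) * (Q2 - c2) - (C2 - c2) * (Q1 - c1)))
      with (c1 * P2 - c2 * P1 + (P1 * C2 - P2 * C1) + (C1 * Q2 - C2 * Q1) + (Q1 * c2 - Q2 * c1)) by ring. exact Ar. }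
  assert (h8 : 0 <= s*((P1 - c1) * (Q2 - c2) - (P2 - c2) * (Q1 - c1))).
  { replace ((P1 - c1) * (Q2 - c2) - (P2 - c2) * (Q1 - c1)) with
      ((c1 - Q1) * (P2 - c2) - (c2 - Q2) * (P1 - c1)) by ring. exact T1. }
  assert (h9 : 0 <= s*((C1 - c1 - (P1 - c1)) * (Q2 - c2 - (C2 - c2)) - (C2 - c2 - (P2 - c2)) * (Q1 - c1 - (C1 - c1)))).
  { replace ((C1 - c1 - (P1 - c1)) * (Q2 - c2 - (C2 - c2)) - (C2 - c2 - (P2 - c2)) * (Q1 - c1 - (C1 - c1)))
      with ((C1 - P1) * (Q2 - C2) - (C2 - P2) * (Q1 - C1)) by ring. exact T2. }
  destruct (kite_alg al r r' s (P1-c1) (P2-c2) (C1-c1) (C2-c2) (Q1-c1) (Q2-c2) Ha Hr Hr' Hs h1 h2 h3 h4 h5 h6 h7 h8 h9)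
    as [G1 [G2 [G3 [G4 [G5 G6]]]]].
  unfold rot; simpl. split; [f_equal; assumption|].
  split; auto. split; auto. split; [rewrite G5; exact HK | rewrite G6; exact HK].
Qed.

Lemma dot_comm u v : dot u v = dot v u.
Proof. unfold dot; ring. Qed.

Lemma angle_comm u v : angle u v = angle v u.
Proof. unfold angle. rewrite dot_comm, (Rmult_comm (norm u)). reflexivity. Qed.

Lemma norm_vsub_comm u v : norm (vsub u v) = norm (vsub v u).
Proof. unfold norm, vsub, dot; simpl. f_equal. ring. Qed.

Lemma corner D alpha c r p s (f : F D) (i : bool) :
  admissible D alpha -> circle_pattern D alpha c r p s -> convex_kites D c p s ->
  vsub (p (fb f (negb i))) (c (fw f i)) =
    rot (s*(2*hh (alpha f) (r (fw f (negb i)) / r (fw f i)))) (vsub (p (fb f i)) (c (fw f i))) /\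
  cos (alpha f) <= r (fw f (negb i)) / r (fw f i) /\
  0 < 2*hh (alpha f) (r (fw f (negb i)) / r (fw f i)) <= PI /\
  0 < s*cross (vsub (p (fb f i)) (c (fw f i))) (vsub (c (fw f (negb i))) (c (fw f i))) /\
  0 < s*cross (vsub (c (fw f (negb i))) (c (fw f i))) (vsub (p (fb f (negb i))) (c (fw f i))).
Proof.
  intros [Hal _] [Hs [Hr Hf]] Hconv.
  destruct (Hf f) as [Hd [Hang Har]].
  pose proof (Hal f) as Ha.
  assert (Hdot : forall j, dot (vsub (c (fw f i)) (p (fb f j))) (vsub (c (fw f (negb i))) (p (fb f j)))
             = r (fw f i) * r (fw f (negb i)) * cos (alpha f)).
  { intros j. 
    assert (N1 : norm (vsub (c (fw f i)) (p (fb f j))) = r (fw f i)).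
    { rewrite norm_vsub_comm. apply (Hd i j). }
    assert (N2 : norm (vsub (c (fw f (negb i))) (p (fb f j))) = r (fw f (negb i))).
    { rewrite norm_vsub_comm. apply (Hd (negb i) j). }
    rewrite <- N1, <- N2. apply angle_dot; [rewrite N1; apply Hr | rewrite N2; apply Hr |].
    destruct i; simpl; [rewrite angle_comm|]; apply Hang. }
  pose proof (Hconv f 1%nat ltac:(lia)) as K1.
  pose proof (Hconv f 3%nat ltac:(lia)) as K3.
  unfold kite_area2 in Har.
  unfold kv, kite in Har, K1, K3. simpl in Har, K1, K3.
  apply kite_pts; try apply Hd; try apply Hdot; auto;
    destruct i; simpl in *; first [assumption | lra].
Qed.

Lemma rot_rot t1 t2 u : rot t1 (rot t2 u) = rot (t1 + t2) u.
Proof. destruct u as [u1 u2]. unfold rot; simpl. rewrite cos_plus, sin_plus. f_equal; ring. Qed.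

Lemma rot_0 u : rot 0 u = u.
Proof. destruct u. unfold rot; simpl. rewrite cos_0, sin_0. f_equal; ring. Qed.

Lemma rot_ext t1 t2 u : t1 = t2 -> rot t1 u = rot t2 u.
Proof. intros ->; auto. Qed.

Lemma cross_rot t1 t2 u : cross (rot t1 u) (rot t2 u) = dot u u * sin (t2 - t1).
Proof.
  destruct u as [u1 u2]. unfold rot, cross, dot; simpl. rewrite sin_minus.
  ring.
Qed.

Lemma dot_rot t u : dot u (rot t u) = dot u u * cos t.
Proof. destruct u as [u1 u2]. unfold rot, dot; simpl. ring. Qed.

Lemma rot_2PI s u : (s = 1 \/ s = -1) -> rot (s * (2*PI)) u = u.
Proof.
  intros Hs. destruct u. unfold rot; simpl.
  destruct Hs as [-> | ->].
  - rewrite Rmult_1_l, cos_2PI, sin_2PI. f_equal; ring.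
  - replace (-1 * (2*PI)) with (-(2*PI)) by ring. rewrite cos_neg, sin_neg, cos_2PI, sin_2PI. f_equal; ring.
Qed.

Lemma sin_s s t : (s = 1 \/ s = -1) -> s * sin (s * t) = sin t.
Proof. intros [-> | ->]. rewrite !Rmult_1_l; auto.
  replace (-1*t) with (-t) by ring. rewrite sin_neg. ring. Qed.

Lemma cos_s s t : (s = 1 \/ s = -1) -> cos (s * t) = cos t.
Proof. intros [-> | ->]. rewrite !Rmult_1_l; auto.
  replace (-1*t) with (-t) by ring. rewrite cos_neg. ring. Qed.

Definition padd (u : pt) (e : R) (w : pt) : pt := (fst u + e * fst w, snd u + e * snd w).

Lemma small_pos b B : 0 < b -> exists e0, 0 < e0 /\ forall e, 0 < e <= e0 -> 0 < b + e * B.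
Proof.
  intros Hb. exists (b / (Rabs B + 1)). split.
  - apply Rdiv_lt_0_compat; auto. pose proof (Rabs_pos B); lra.
  - intros e [He1 He2]. pose proof (Rabs_pos B).
    assert (e * (Rabs B + 1) <= b).
    { apply (Rmult_le_compat_r (Rabs B + 1)) in He2; [|lra].
      unfold Rdiv in He2. rewrite Rmult_assoc, Rinv_l, Rmult_1_r in He2 by lra. lra. }
    assert (- (e * Rabs B) <= e * B).
    { destruct (Rcase_abs B); [rewrite Rabs_left by auto| rewrite Rabs_right by auto]; nra. }
    nra.
Qed.

Lemma kite_interior s (cv P C Q w : pt) :
  0 < s * cross (vsub P cv) w -> 0 < s * cross w (vsub Q cv) ->
  0 < s * cross (vsub P cv) (vsub C cv) -> 0 < s * cross (vsub C cv) (vsub Q cv) ->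
  exists e0, 0 < e0 /\ forall e, 0 < e <= e0 ->
    0 < s * cross (vsub P cv) (vsub (padd cv e w) cv) /\
    0 < s * cross (vsub C P) (vsub (padd cv e w) P) /\
    0 < s * cross (vsub Q C) (vsub (padd cv e w) C) /\
    0 < s * cross (vsub cv Q) (vsub (padd cv e w) Q).
Proof.
  intros H1 H2 H3 H4.
  destruct cv as [c1 c2], P as [P1 P2], C as [C1 C2], Q as [Q1 Q2], w as [w1 w2].
  unfold cross, vsub, padd in *; simpl in *.
  destruct (small_pos _ (s*((C1-c1-(P1-c1))*w2 - (C2-c2-(P2-c2))*w1)) H3) as [e1 [He1 F1]].
  destruct (small_pos _ (s*((Q1-c1-(C1-c1))*w2 - (Q2-c2-(C2-c2))*w1)) H4) as [e2 [He2 F2]].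
  exists (Rmin e1 e2). split. { apply Rmin_glb_lt; auto. }
  intros e [He He']. pose proof (Rmin_l e1 e2). pose proof (Rmin_r e1 e2).
  specialize (F1 e ltac:(lra)). specialize (F2 e ltac:(lra)).
  repeat split.
  - replace (s * ((P1 - c1) * (c2 + e * w2 - c2) - (P2 - c2) * (c1 + e * w1 - c1)))
      with (e * (s * ((P1 - c1) * w2 - (P2 - c2) * w1))) by ring.
    apply Rmult_lt_0_compat; lra.
  - match goal with |- 0 < ?g => replace g with
      (s * ((P1 - c1) * (C2 - c2) - (P2 - c2) * (C1 - c1)) + e * (s * ((C1 - c1 - (P1 - c1)) * w2 - (C2 - c2 - (P2 - c2)) * w1))) by ring end.
    exact F1.
  - match goal with |- 0 < ?g => replace g with
      (s * ((C1 - c1) * (Q2 - c2) - (C2 - c2) * (Q1 - c1)) + e * (s * ((Q1 - c1 - (C1 - c1)) * w2 - (Q2 - c2 - (C2 - c2)) * w1))) by ring end.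
    exact F2.
  - match goal with |- 0 < ?g => replace g with
      (e * (s * (w1 * (Q2 - c2) - w2 * (Q1 - c1)))) by ring end.
    apply Rmult_lt_0_compat; lra.
Qed.

Lemma s_cross_rot s a1 t1 t2 : (s = 1 \/ s = -1) ->
  s * cross (rot (s*t1) a1) (rot (s*t2) a1) = dot a1 a1 * sin (t2 - t1).
Proof.
  intros Hs. rewrite cross_rot. replace (s*t2 - s*t1) with (s*(t2-t1)) by ring.
  rewrite <- (sin_s s (t2 - t1) Hs). ring.
Qed.

Lemma corner_interior D alpha c r p s (f : F D) (i : bool) a1 sg psi :
  admissible D alpha -> circle_pattern D alpha c r p s -> convex_kites D c p s ->
  vsub (p (fb f i)) (c (fw f i)) = rot (s*sg) a1 -> 0 < dot a1 a1 ->
  sg < psi < sg + 2*hh (alpha f) (r (fw f (negb i)) / r (fw f i)) ->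
  exists e0, 0 < e0 /\ forall e, 0 < e <= e0 ->
    in_kite_int D c p s f (padd (c (fw f i)) e (rot (s*psi) a1)).
Proof.
  intros Had Hcp Hcv HA Ha1 Hpsi.
  pose proof Hcp as [Hs _].
  destruct (corner D alpha c r p s f i Had Hcp Hcv) as [HE [_ [Hth [B1 B2]]]].
  set (th := 2 * hh (alpha f) (r (fw f (negb i)) / r (fw f i))) in *.
  destruct (kite_interior s (c (fw f i)) (p (fb f i)) (c (fw f (negb i))) (p (fb f (negb i)))
              (rot (s*psi) a1)) as [e0 [He0 Hint]]; auto.
  - rewrite HA, s_cross_rot by auto. apply Rmult_lt_0_compat; auto. apply sin_gt_0; lra.
  - rewrite HE, HA, rot_rot. replace (s*th + s*sg) with (s*(th+sg)) by ring.
    rewrite s_cross_rot by auto. apply Rmult_lt_0_compat; auto. apply sin_gt_0; lra.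
  - exists e0. split; auto. intros e He. destruct (Hint e He) as [I1 [I2 [I3 I4]]].
    intros k Hk. destruct k as [|[|[|[|k]]]]; [| | | | lia];
    destruct i; unfold kv, kite; simpl in *; assumption.
Qed.

Definition sumL {X} (g : X -> R) (L : list X) : R := fold_right (fun x acc => g x + acc) 0 L.

Lemma chain_app_l {X} (Rl : X -> X -> Prop) L M : chain Rl (L ++ M) -> chain Rl L.
Proof.
  induction L as [|x L IH]; [simpl; auto|].
  destruct L as [|y L].
  - intros; simpl; auto.
  - intros H. change (Rl x y /\ chain Rl ((y :: L) ++ M)) in H. destruct H as [H1 H2].
    change (Rl x y /\ chain Rl (y :: L)). split; auto.
Qed.

Lemma chain_close {X} (Rl : X -> X -> Prop) (A E : X -> pt) (th : X -> R) s a1 :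
  (forall x y, Rl x y -> E x = A y) ->
  forall L x z sg, (forall w, In w (x::L) -> E w = rot (s * th w) (A w)) ->
  chain Rl (x :: L ++ z :: nil) -> A x = rot (s*sg) a1 ->
  A z = rot (s*(sg + sumL th (x::L))) a1.
Proof.
  intros HRE L. induction L as [|y L IH]; intros x z sg HW Hc HA.
  - simpl in Hc. destruct Hc as [Hxz _]. rewrite <- (HRE _ _ Hxz), HW by (left; auto).
    rewrite HA, rot_rot. apply rot_ext. simpl. ring.
  - simpl in Hc. destruct Hc as [Hxy Hc].
    assert (HAy : A y = rot (s*(sg + th x)) a1).
    { rewrite <- (HRE _ _ Hxy), HW by (left; auto). rewrite HA, rot_rot. apply rot_ext. ring. }
    rewrite (IH y z (sg + th x)); auto.
    + apply rot_ext. simpl. ring.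
    + intros w Hw. apply HW. right; auto.
Qed.

Lemma cover {X} (Rl : X -> X -> Prop) (A E : X -> pt) (th : X -> R) s a1 :
  (forall x y, Rl x y -> E x = A y) ->
  forall L x sg lo hi, (forall w, In w (x::L) -> E w = rot (s * th w) (A w)) ->
  chain Rl (x :: L) -> A x = rot (s*sg) a1 -> sg <= lo -> lo < hi -> lo < sg + sumL th (x::L) ->
  exists w sw psi, In w (x::L) /\ A w = rot (s*sw) a1 /\ lo < psi < hi /\ sw < psi < sw + th w.
Proof.
  intros HRE L. induction L as [|y L IH]; intros x sg lo hi HW Hc HA H1 H2 H3.
  - exists x, sg, ((lo + Rmin hi (sg + th x))/2). simpl in H3.
    pose proof (Rmin_l hi (sg + th x)). pose proof (Rmin_r hi (sg + th x)).
    assert (lo < Rmin hi (sg + th x)) by (apply Rmin_glb_lt; lra).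
    repeat split; auto; try lra. left; auto.
  - destruct (Rlt_le_dec lo (sg + th x)).
    + exists x, sg, ((lo + Rmin hi (sg + th x))/2).
      pose proof (Rmin_l hi (sg + th x)). pose proof (Rmin_r hi (sg + th x)).
      assert (lo < Rmin hi (sg + th x)) by (apply Rmin_glb_lt; lra).
      repeat split; auto; try lra. left; auto.
    + simpl in Hc. destruct Hc as [Hxy Hc].
      assert (HAy : A y = rot (s*(sg + th x)) a1).
      { rewrite <- (HRE _ _ Hxy), HW by (left; auto). rewrite HA, rot_rot. apply rot_ext. ring. }
      destruct (IH y (sg + th x) lo hi) as [w [sw [psi [Hw Hrest]]]]; auto.
      * intros w Hw. apply HW. right; auto.
      * simpl in H3 |- *. lra.
      * exists w, sw, psi. split; auto. right; auto.
Qed.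

Lemma sumL_pos {X} (g : X -> R) L : (forall x, In x L -> 0 < g x) -> L <> nil -> 0 < sumL g L.
Proof.
  induction L as [|x L IH]; intros H Hn; [congruence|]. simpl.
  destruct L as [|y L].
  - simpl. specialize (H x (or_introl eq_refl)). lra.
  - assert (0 < sumL g (y::L)) by (apply IH; [intros; apply H; right; auto| congruence]).
    specialize (H x (or_introl eq_refl)). simpl in *. lra.
Qed.

Definition RlW (D : bquad) (x y : F D * bool) : Prop :=
  fb (fst x) (negb (snd x)) = fb (fst y) (snd y).

Lemma angle_sum D alpha q c r p s v (l : list (F D * bool)) :
  is_bquad D -> admissible D alpha -> ecq_pattern D alpha q c r p s ->
  l <> nil -> NoDup l -> (forall f i, fw f i = v <-> In (f, i) l) -> cyc_chain (RlW D) l ->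
  sumL (fun x => 2*hh (alpha (fst x)) (r (fw (fst x) (negb (snd x))) / r v)) l = 2*PI.
Proof.
  intros Hbq Had [Hcp [Hcv [_ Hemb]]] Hne Hnd Hmem Hcyc.
  pose proof Hcp as [Hs [Hr Hf]].
  set (th := fun x : F D * bool => 2*hh (alpha (fst x)) (r (fw (fst x) (negb (snd x))) / r v)).
  set (A := fun x : F D * bool => vsub (p (fb (fst x) (snd x))) (c v)).
  set (E := fun x : F D * bool => vsub (p (fb (fst x) (negb (snd x)))) (c v)).
  assert (Hv : forall x, In x l -> fw (fst x) (snd x) = v).
  { intros [f i] H. apply Hmem. auto. }
  assert (HRE : forall x y, RlW D x y -> E x = A y).
  { intros x y H. unfold E, A, RlW in *. rewrite H. auto. }
  assert (HW : forall w, In w l -> E w = rot (s * th w) (A w)).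
  { intros [f i] Hw. pose proof (Hv _ Hw) as Hv'. simpl in Hv'.
    destruct (corner D alpha c r p s f i Had Hcp Hcv) as [HE _].
    unfold E, A, th; simpl. rewrite <- Hv'. exact HE. }
  assert (Hthp : forall w, In w l -> 0 < th w <= PI).
  { intros [f i] Hw. pose proof (Hv _ Hw) as Hv'. simpl in Hv'.
    destruct (corner D alpha c r p s f i Had Hcp Hcv) as [_ [_ [Ht _]]].
    unfold th; simpl. rewrite <- Hv'. exact Ht. }
  destruct l as [|x1 t]; [congruence|].
  set (a1 := A x1).
  assert (Ha1 : 0 < dot a1 a1).
  { unfold a1, A. destruct x1 as [f1 i1]. simpl.
    pose proof (Hv (f1, i1) (or_introl eq_refl)) as Hv1. simpl in Hv1.
    destruct (Hf f1) as [Hd _]. pose proof (Hd i1 i1) as Hd1. rewrite Hv1 in Hd1.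
    apply dist_sq in Hd1. rewrite Hd1. pose proof (Hr v). nra. }
  set (S := sumL th (x1 :: t)).
  assert (Hclose : a1 = rot (s * (0 + S)) a1).
  { apply (chain_close (RlW D) A E th s a1 HRE t x1 x1 0); auto.
    rewrite Rmult_0_r, rot_0. reflexivity. }
  assert (HcosS : cos S = 1).
  { pose proof (dot_rot (s * (0 + S)) a1) as Hd. rewrite <- Hclose in Hd.
    rewrite Rplus_0_l, cos_s in Hd by auto.
    apply (Rmult_eq_reg_l (dot a1 a1)); lra. }
  assert (HSpos : 0 < S).
  { apply sumL_pos; [intros; apply Hthp; auto | congruence]. }
  assert (HSle : S <= 2*PI).
  { destruct (Rle_lt_dec S (2*PI)) as [|Hgt]; auto. exfalso.
    destruct t as [|x2 t'].
    { unfold S in Hgt. simpl in Hgt. pose proof (Hthp x1 (or_introl eq_refl)). pose proof PI_RGT_0. lra. }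
    simpl in Hcyc. destruct Hcyc as [H12 Hcyc'].
    assert (HA2 : A x2 = rot (s * (0 + th x1)) a1).
    { rewrite <- (HRE _ _ H12), HW by (left; auto). apply rot_ext. ring. }
    pose proof (Hthp x1 (or_introl eq_refl)) as Ht1. pose proof PI_RGT_0.
    destruct (cover (RlW D) A E th s a1 HRE t' x2 (0 + th x1) (2*PI) (2*PI + th x1))
      as [w [sw [psi [Hw [HAw [Hpsi1 Hpsi2]]]]]]; auto.
    - intros w Hw. apply HW. right; auto.
    - apply (chain_app_l _ _ (x1 :: nil)). exact Hcyc'.
    - lra.
    - lra.
    - unfold S in Hgt. simpl in Hgt |- *. lra.
    -
      destruct w as [fw' iw]. destruct x1 as [f1 i1].
      assert (Hinw : In (fw', iw) ((f1, i1) :: x2 :: t')) by (right; auto).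
      pose proof (Hv _ Hinw) as Hvw. simpl in Hvw.
      pose proof (Hv _ (or_introl eq_refl)) as Hv1. simpl in Hv1.
      destruct (corner_interior D alpha c r p s fw' iw a1 sw psi Had Hcp Hcv) as [e0 [He0 I0]].
      { unfold A in HAw; simpl in HAw. rewrite Hvw. exact HAw. }
      { auto. }
      { unfold th in Hpsi2; simpl in Hpsi2. rewrite Hvw. exact Hpsi2. }
      destruct (corner_interior D alpha c r p s f1 i1 a1 0 (psi - 2*PI) Had Hcp Hcv) as [e1 [He1 I1]].
      { rewrite Rmult_0_r, rot_0. unfold a1, A; simpl. rewrite Hv1. reflexivity. }
      { auto. }
      { unfold th in Ht1, Hpsi1; simpl in Ht1, Hpsi1. rewrite Hv1. lra. }
      set (e := Rmin e0 e1).
      assert (He : 0 < e <= e0 /\ 0 < e <= e1).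
      { unfold e. pose proof (Rmin_l e0 e1). pose proof (Rmin_r e0 e1).
        assert (0 < Rmin e0 e1) by (apply Rmin_glb_lt; auto). lra. }
      specialize (I0 e (proj1 He)). specialize (I1 e (proj2 He)).
      assert (Hrot : rot (s * (psi - 2*PI)) a1 = rot (s * psi) a1).
      { rewrite <- (rot_2PI s (rot (s * (psi - 2 * PI)) a1) Hs), rot_rot. apply rot_ext. ring. }
      rewrite Hrot, Hv1 in I1. rewrite Hvw in I0.
      assert (Hneq : f1 <> fw').
      { intros <-. inversion Hnd as [|? ? Hnot Hnd']. 
        destruct (Bool.bool_dec i1 iw) as [<-|Hne'].
        - apply Hnot. exact Hw.
        - destruct Hbq as [_ [_ [_ [Hdist _]]]]. destruct (Hdist f1) as [Hdw _].
          apply Hdw. destruct i1, iw; simpl in *; congruence. }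
      destruct (Hemb f1 fw' Hneq) as [Hdisj _].
      apply (Hdisj (padd (c v) e (rot (s * psi) a1))). split; auto. }
  destruct (Rle_lt_dec (2*PI) S) as [|Hlt]; [lra|]. exfalso.
  pose proof (cos_2a_sin (S/2)) as Hc2. replace (2*(S/2)) with S in Hc2 by field.
  assert (0 < sin (S/2)) by (apply sin_gt_0; lra). nra.
Qed.

Lemma sumL_perm {X} (g : X -> R) L M : Permutation L M -> sumL g L = sumL g M.
Proof. induction 1; simpl in *; try lra. Qed.

Lemma sumL_le {X} (g1 g2 : X -> R) L : (forall x, In x L -> g1 x <= g2 x) -> sumL g1 L <= sumL g2 L.
Proof.
  induction L as [|x L IH]; simpl; intros H; [lra|].
  pose proof (H x (or_introl eq_refl)). assert (sumL g1 L <= sumL g2 L) by (apply IH; auto). lra.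
Qed.

Lemma sumL_lin {X} (a b : X -> R) u L :
  sumL (fun x => u * (a x - b x)) L = u * (sumL a L - sumL b L).
Proof. induction L as [|x L IH]; simpl; [ring|]. rewrite IH. ring. Qed.

Definition L0 (D : bquad) : list (F D * bool) :=
  flat_map (fun f => (f, false) :: (f, true) :: nil) (enumF D).

Lemma L0_nodup D : NoDup (enumF D) -> NoDup (L0 D).
Proof.
  unfold L0. induction (enumF D) as [|f E IH]; simpl; intros H; [constructor|].
  inversion H as [|? ? Hf HE]; subst.
  assert (Hn : forall b, ~ In (f, b) (flat_map (fun f0 => (f0, false) :: (f0, true) :: nil) E)).
  { intros b Hin. apply in_flat_map in Hin. destruct Hin as [f' [Hf' Hin]].
    simpl in Hin. destruct Hin as [E1|[E1|[]]]; inversion E1; subst; auto. }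
  constructor.
  - intros [E1|Hin]; [discriminate|]. apply (Hn false). exact Hin.
  - constructor; [apply Hn|]. apply IH; auto.
Qed.

Lemma L0_in D x : (forall f, In f (enumF D)) -> In x (L0 D).
Proof.
  intros H. destruct x as [f b]. unfold L0. apply in_flat_map. exists f. split; auto.
  destruct b; simpl; auto.
Qed.

Lemma lap_sum D alpha r h v (l : list (F D * bool)) :
  is_bquad D -> NoDup l -> (forall f i, fw f i = v <-> In (f, i) l) ->
  laplacian D alpha r h v =
  sumL (fun x => mu D alpha r (fst x) v (fw (fst x) (negb (snd x))) *
                 (h (fw (fst x) (negb (snd x))) - h v)) l.
Proof.
  intros Hbq Hnd Hmem.
  destruct Hbq as [_ [_ [[HndF HinF] _]]].
  set (T := fun x : F D * bool => mu D alpha r (fst x) v (fw (fst x) (negb (snd x))) *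
                 (h (fw (fst x) (negb (snd x))) - h v)).
  set (P := fun x : F D * bool => if eqW D (fw (fst x) (snd x)) v then true else false).
  assert (E1 : laplacian D alpha r h v = sumL (fun x => if P x then T x else 0) (L0 D)).
  { clear HndF HinF. unfold laplacian, sumF, L0, sum_bool, P, T. induction (enumF D) as [|f E IH]; simpl; [reflexivity|].
    simpl in IH. rewrite IH. destruct (eqW D (fw f false) v); destruct (eqW D (fw f true) v); simpl; ring. }
  assert (E2 : forall L, sumL (fun x => if P x then T x else 0) L = sumL T (filter P L)).
  { induction L as [|x L IH]; simpl; [reflexivity|]. destruct (P x); simpl; rewrite IH; ring. }
  rewrite E1, E2. apply sumL_perm. apply NoDup_Permutation; auto.
  - apply NoDup_filter. apply L0_nodup; auto.
  - intros [f i]. rewrite filter_In. split.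
    + intros [_ HP]. unfold P in HP; simpl in HP. destruct (eqW D (fw f i) v) as [e|]; [|discriminate].
      apply Hmem; auto.
    + intros Hin. split; [apply L0_in; auto|]. unfold P; simpl.
      destruct (eqW D (fw f i) v) as [|n]; auto. exfalso; apply n, Hmem; auto.
Qed.

Lemma term_eq al rv rw tv tw : 0 < al < PI -> 0 < rv -> 0 < rw -> 0 < tv -> 0 < tw ->
  2 * fprime al (ln (rw / rv)) * (tw / rw - tv / rv) =
  2 * (tv / rv) * (sin al * (tw / tv - rw / rv) / Vq al (rw / rv)).
Proof.
  intros Ha H1 H2 H3 H4.
  assert (Hy : 0 < rw / rv) by (apply Rdiv_lt_0_compat; auto).
  pose proof (Vq_pos al (rw / rv) Ha) as HQ.
  unfold fprime, cosh. rewrite exp_Ropp, exp_ln by auto.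
  assert (Hc : ((rw / rv + / (rw / rv)) / 2 - cos al) = Vq al (rw/rv) / (2 * (rw / rv))).
  { unfold Vq. field. split; lra. }
  rewrite Hc. field. repeat split; lra.
Qed.

Lemma main1 D alpha q c r p s ct rt pt' st v (h : W D -> R) :
  is_bquad D -> admissible D alpha ->
  ecq_pattern D alpha q c r p s -> ecq_pattern D alpha q ct rt pt' st ->
  interior_W D v -> (forall w, h w = rt w / r w) ->
  0 <= laplacian D alpha r h v.
Proof.
  intros Hbq Had H1 H2 [l [Hne [Hnd [Hmem Hcyc]]]] Hh.
  rewrite (lap_sum D alpha r h v l Hbq Hnd Hmem).
  pose proof (angle_sum D alpha q c r p s v l Hbq Had H1 Hne Hnd Hmem Hcyc) as S1.
  pose proof (angle_sum D alpha q ct rt pt' st v l Hbq Had H2 Hne Hnd Hmem Hcyc) as S2.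
  destruct H1 as [Hcp1 [Hcv1 _]]. destruct H2 as [Hcp2 [Hcv2 _]].
  pose proof Hcp1 as [_ [Hr1 _]]. pose proof Hcp2 as [_ [Hr2 _]].
  set (u := rt v / r v).
  assert (Hu : 0 < u) by (apply Rdiv_lt_0_compat; auto).
  apply Rle_trans with (sumL (fun x => u * (2*hh (alpha (fst x)) (rt (fw (fst x) (negb (snd x))) / rt v)
                                          - 2*hh (alpha (fst x)) (r (fw (fst x) (negb (snd x))) / r v))) l).
  - rewrite sumL_lin, S1, S2. lra.
  - apply sumL_le. intros [f i] Hin. simpl.
    assert (Hv : fw f i = v) by (apply Hmem; auto).
    destruct (corner D alpha c r p s f i Had Hcp1 Hcv1) as [_ [Hy _]].
    destruct (corner D alpha ct rt pt' st f i Had Hcp2 Hcv2) as [_ [Hz _]].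
    rewrite Hv in Hy, Hz.
    destruct Had as [Hal _].
    rewrite !Hh. unfold mu.
    rewrite (term_eq (alpha f) (r v) (r (fw f (negb i))) (rt v) (rt (fw f (negb i)))); auto.
    fold u.
    pose proof (key_ineq (alpha f) (r (fw f (negb i)) / r v) (rt (fw f (negb i)) / rt v) (Hal f)
       ltac:(apply Rdiv_lt_0_compat; auto) ltac:(apply Rdiv_lt_0_compat; auto) Hy Hz) as K.
    nra.
Qed.

Theorem lemma6p4 (D : bquad) (alpha : F D -> R) (q : R)
  (c : W D -> pt) (r : W D -> R) (p : B D -> pt) (s : R)
  (ct : W D -> pt) (rt : W D -> R) (pt_ : B D -> pt) (st : R) :
  is_bquad D ->
  admissible D alpha ->
  1 < q ->
  ecq_pattern D alpha q c r p s ->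
  ecq_pattern D alpha q ct rt pt_ st ->
  forall v : W D, interior_W D v ->
    0 <= laplacian D alpha r (fun w => rt w / r w) v /\
    0 <= laplacian D alpha rt (fun w => / (rt w / r w)) v.
Proof.
  intros Hbq Had _ H1 H2 v Hv. split.
  - apply (main1 D alpha q c r p s ct rt pt_ st v); auto.
  - apply (main1 D alpha q ct rt pt_ st c r p s v); auto.
    intros w. destruct H1 as [[_ [Hr1 _]] _]. destruct H2 as [[_ [Hr2 _]] _].
    pose proof (Hr1 w). pose proof (Hr2 w). field. split; lra.
Qed.
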